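(* Let $n_1,n_2,K_1,K_2$ be positive integers with $K_i\le n_i$. Fix clustering functions $z_1:\{1,\dots,n_1\}\to\{1,\dots,K_1\}$ and $z_2:\{1,\dots,n_2\}\to\{1,\dots,K_2\}$. Let $\mathcal D$ be the set of (non-symmetric) DCBM matrices of size $n_1\times n_2$ with $K_1\times K_2$ blocks, i.e. the matrices $\Theta\in[0,1]^{n_1\times n_2}$ of the form $$\Theta_{ij}=B_{z_1(i),z_2(j)}\,u_i\,v_j$$ for some $B\in\mathbb R_+^{K_1\times K_2}$, $u\in\mathbb R_+^{n_1}$ and $v\in\mathbb R_+^{n_2}$. Then for every $\delta\in(0,1]$ there is a $\delta$-net of $\mathcal D$ in Frobenius norm whose cardinality has logarithm at most $$(K_1K_2+n_1+n_2)\ln\Big(\frac{9}{\delta}\Big)+\Big(K_1K_2+\frac{n_1+n_2}{2}\Big)\ln(n_1n_2).$$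
   Context: A $\delta$-net of a set $\mathcal S$ of matrices in Frobenius norm is a finite set $\mathcal Y$ such that for every $S\in\mathcal S$ there is $Y\in\mathcal Y$ with $\|S-Y\|_F\le\delta$. *)

(* Defs.v *)
(* real numbers, ln. Matrices are functions nat -> nat -> R,
   with 0-indexed rows i < n1 and columns j < n2. *)
From Stdlib Require Export Reals List.
Open Scope R_scope.

Fixpoint sumR (n : nat) (f : nat -> R) : R :=
  match n with
  | O => 0
  | S m => sumR m f + f m
  end.

Definition mat := nat -> nat -> R.

Definition frob (n1 n2 : nat) (A : mat) : R :=
  sqrt (sumR n1 (fun i => sumR n2 (fun j => (A i j) ^ 2))).

Definition mat_sub (A B : mat) : mat := fun i j => A i j - B i j.

Definition DCBM (n1 n2 : nat) (z1 z2 : nat -> nat) (Theta : mat) : Prop :=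
  (forall i j, (i < n1)%nat -> (j < n2)%nat -> 0 <= Theta i j <= 1) /\
  exists (B : mat) (u v : nat -> R),
    (forall a b, 0 <= B a b) /\ (forall i, 0 <= u i) /\ (forall j, 0 <= v j) /\
    forall i j, (i < n1)%nat -> (j < n2)%nat ->
      Theta i j = B (z1 i) (z2 j) * u i * v j.

Definition is_net (n1 n2 : nat) (S : mat -> Prop) (delta : R) (Y : list mat) : Prop :=
  forall A, S A -> exists M, In M Y /\ frob n1 n2 (mat_sub A M) <= delta.

(* Main.v *)
Require Import Defs.
From Stdlib Require Import Reals List Lia Lra ZArith.
Open Scope R_scope.

Fixpoint maxR (n : nat) (f : nat -> R) : R :=
  match n with O => 0 | S m => Rmax (maxR m f) (f m) end.

Lemma maxR_ge n f i : (i < n)%nat -> f i <= maxR n f.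
Proof.
  induction n; intros H; [lia|]. simpl.
  destruct (Nat.eq_dec i n) as [->|Hn].
  - apply Rmax_r.
  - eapply Rle_trans; [apply IHn; lia| apply Rmax_l].
Qed.

Lemma maxR_nonneg n f : 0 <= maxR n f.
Proof. induction n; simpl; [lra|]. eapply Rle_trans; [exact IHn|apply Rmax_l]. Qed.

Lemma maxR_att n f : maxR n f = 0 \/ exists i, (i < n)%nat /\ maxR n f = f i.
Proof.
  induction n; simpl; [left; reflexivity|].
  unfold Rmax. destruct (Rle_dec (maxR n f) (f n)).
  - right; exists n; split; [lia|reflexivity].
  - destruct IHn as [H|[i [Hi H]]]; [left; exact H|right; exists i; split; [lia|exact H]].
Qed.

Lemma normalize n1 n2 z1 z2 Theta : DCBM n1 n2 z1 z2 Theta ->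
  exists (B : mat) (u v : nat -> R),
    (forall a b, 0 <= B a b <= 1) /\ (forall i, (i < n1)%nat -> 0 <= u i <= 1) /\
    (forall j, (j < n2)%nat -> 0 <= v j <= 1) /\
    forall i j, (i < n1)%nat -> (j < n2)%nat -> Theta i j = B (z1 i) (z2 j) * u i * v j.
Proof.
  intros [Hb [B [u [v [HB [Hu [Hv HT]]]]]]].
  set (mu := fun a => maxR n1 (fun i => if Nat.eq_dec (z1 i) a then u i else 0)).
  set (mv := fun b => maxR n2 (fun j => if Nat.eq_dec (z2 j) b then v j else 0)).
  assert (Hmu : forall i, (i < n1)%nat -> u i <= mu (z1 i)).
  { intros i Hi. unfold mu. 
    pose proof (maxR_ge n1 (fun i0 => if Nat.eq_dec (z1 i0) (z1 i) then u i0 else 0) i Hi) as H.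
    simpl in H. destruct (Nat.eq_dec (z1 i) (z1 i)); [exact H|congruence]. }
  assert (Hmv : forall j, (j < n2)%nat -> v j <= mv (z2 j)).
  { intros j Hj. unfold mv. 
    pose proof (maxR_ge n2 (fun j0 => if Nat.eq_dec (z2 j0) (z2 j) then v j0 else 0) j Hj) as H.
    simpl in H. destruct (Nat.eq_dec (z2 j) (z2 j)); [exact H|congruence]. }
  assert (Hmu0 : forall a, 0 <= mu a) by (intros; apply maxR_nonneg).
  assert (Hmv0 : forall b, 0 <= mv b) by (intros; apply maxR_nonneg).
  exists (fun a b => B a b * mu a * mv b),
    (fun i => if Req_EM_T (mu (z1 i)) 0 then 0 else u i / mu (z1 i)),
    (fun j => if Req_EM_T (mv (z2 j)) 0 then 0 else v j / mv (z2 j)).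
  split; [|split; [|split]].
  - intros a b. split.
    + apply Rmult_le_pos; [apply Rmult_le_pos|]; auto.
    + destruct (maxR_att n1 (fun i => if Nat.eq_dec (z1 i) a then u i else 0)) as [H0|[i [Hi Hmi]]].
      { change (maxR _ _) with (mu a) in H0. rewrite H0. lra. }
      change (maxR _ _) with (mu a) in Hmi.
      destruct (Nat.eq_dec (z1 i) a) as [Ea|Ea]; [|rewrite Hmi; lra].
      destruct (maxR_att n2 (fun j => if Nat.eq_dec (z2 j) b then v j else 0)) as [H0|[j [Hj Hmj]]].
      { change (maxR _ _) with (mv b) in H0. rewrite H0. lra. }
      change (maxR _ _) with (mv b) in Hmj.
      destruct (Nat.eq_dec (z2 j) b) as [Eb|Eb]; [|rewrite Hmj; lra].
      rewrite Hmi, Hmj, <- Ea, <- Eb, <- HT by assumption. apply (Hb i j Hi Hj).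
  - intros i Hi. destruct (Req_EM_T (mu (z1 i)) 0); [lra|].
    pose proof (Hmu i Hi). pose proof (Hu i). pose proof (Hmu0 (z1 i)).
    split.
    + apply Rmult_le_pos; [lra|]. left; apply Rinv_0_lt_compat; lra.
    + apply (Rmult_le_reg_r (mu (z1 i))); [lra|]. field_simplify; lra.
  - intros j Hj. destruct (Req_EM_T (mv (z2 j)) 0); [lra|].
    pose proof (Hmv j Hj). pose proof (Hv j). pose proof (Hmv0 (z2 j)).
    split.
    + apply Rmult_le_pos; [lra|]. left; apply Rinv_0_lt_compat; lra.
    + apply (Rmult_le_reg_r (mv (z2 j))); [lra|]. field_simplify; lra.
  - intros i j Hi Hj. rewrite HT by assumption.
    pose proof (Hmu i Hi). pose proof (Hu i). pose proof (Hmv j Hj). pose proof (Hv j).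
    destruct (Req_EM_T (mu (z1 i)) 0) as [E1|E1].
    { assert (u i = 0) by lra. rewrite H3. ring. }
    destruct (Req_EM_T (mv (z2 j)) 0) as [E2|E2].
    { assert (v j = 0) by lra. rewrite H3. ring. }
    field. split; assumption.
Qed.

Definition q (N0 : nat) (x : R) : nat := Z.to_nat (up (x * INR N0) - 1).

Lemma q_spec N0 x : (0 < N0)%nat -> 0 <= x <= 1 ->
  (q N0 x <= N0)%nat /\ Rabs (x - INR (q N0 x) / INR N0) <= 1 / INR N0.
Proof.
  intros HN Hx. assert (HN' : 0 < INR N0) by (apply lt_0_INR; lia).
  set (y := x * INR N0).
  assert (Hy : 0 <= y <= INR N0) by (unfold y; split; nra).
  destruct (archimed y) as [A1 A2].
  set (k := (up y - 1)%Z).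
  assert (Hk : IZR k = IZR (up y) - 1) by (unfold k; rewrite minus_IZR; reflexivity).
  assert (k0 : (0 <= k)%Z).
  { assert (IZR (-1) < IZR k) by lra. apply lt_IZR in H. lia. }
  assert (kN : (k <= Z.of_nat N0)%Z).
  { apply le_IZR. rewrite <- INR_IZR_INZ. lra. }
  assert (E : INR (q N0 x) = IZR k).
  { unfold q. fold y. fold k. rewrite INR_IZR_INZ, Z2Nat.id; auto. }
  split.
  - unfold q; fold y; fold k. lia.
  - rewrite E. apply Rabs_le. 
    assert (x - IZR k / INR N0 = (y - IZR k) / INR N0) by (unfold y; field; lra).
    rewrite H. split.
    + apply (Rmult_le_reg_r (INR N0)); [lra|]. field_simplify; lra.
    + apply (Rmult_le_reg_r (INR N0)); [lra|]. field_simplify; lra.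
Qed.

Lemma err3 x y z x' y' z' e : 0 <= x <= 1 -> 0 <= y <= 1 -> 0 <= z <= 1 ->
  0 <= x' <= 1 -> 0 <= y' <= 1 -> 0 <= z' <= 1 ->
  Rabs (x - x') <= e -> Rabs (y - y') <= e -> Rabs (z - z') <= e ->
  Rabs (x*y*z - x'*y'*z') <= 3*e.
Proof.
  intros. replace (x*y*z - x'*y'*z') with ((x-x')*(y*z) + x'*((y-y')*z) + x'*y'*(z-z')) by ring.
  eapply Rle_trans; [apply Rabs_triang|].
  eapply Rle_trans; [apply Rplus_le_compat; [apply Rabs_triang|apply Rle_refl]|].
  rewrite !Rabs_mult.
  repeat rewrite (Rabs_right x'), ?(Rabs_right y'), ?(Rabs_right y), ?(Rabs_right z), ?(Rabs_right (y*z)) by (try apply Rle_ge; try apply Rmult_le_pos; lra).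
  pose proof (Rabs_pos (x-x')). pose proof (Rabs_pos (y-y')). pose proof (Rabs_pos (z-z')).
  assert (0 <= y*z <= 1) by (split; nra).
  assert (0 <= x'*y' <= 1) by (split; nra).
  set (a := Rabs (x - x')) in *. set (b := Rabs (y - y')) in *. set (c := Rabs (z - z')) in *.
  assert (a * (y*z) <= a) by nra. assert (b * z <= b) by nra.
  assert (x' * (b*z) <= b) by nra. assert (x'*y'*c <= c) by nra. lra.
Qed.

Lemma sumR_le n f c : (forall i, (i < n)%nat -> f i <= c) -> sumR n f <= INR n * c.
Proof.
  induction n; intros H; cbn [sumR]; [simpl; lra|].
  rewrite S_INR. assert (sumR n f <= INR n * c) by (apply IHn; intros; apply H; lia).
  specialize (H n ltac:(lia)). lra.
Qed.

Fixpoint tuples {A} (xs : list A) (L : nat) : list (list A) :=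
  match L with
  | O => nil :: nil
  | S L' => flat_map (fun t => map (fun x => x :: t) xs) (tuples xs L')
  end.

Lemma length_flat_map_const {A B} (f : A -> list B) l c :
  (forall x, length (f x) = c) -> length (flat_map f l) = (length l * c)%nat.
Proof. intros H; induction l; simpl; auto. rewrite length_app, H, IHl. reflexivity. Qed.

Lemma length_tuples {A} (xs : list A) L : length (tuples xs L) = (length xs ^ L)%nat.
Proof.
  induction L; simpl; auto.
  rewrite (length_flat_map_const _ _ (length xs)) by (intros; apply length_map).
  rewrite IHL. lia.
Qed.

Lemma in_tuples {A} (xs : list A) l : (forall x, In x l -> In x xs) -> In l (tuples xs (length l)).
Proof.
  induction l as [|a l IH]; intros H; simpl; [auto|].
  apply in_flat_map. exists l. split.
  - apply IH. intros; apply H; simpl; auto.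
  - apply in_map_iff. exists a. split; auto. apply H; simpl; auto.
Qed.

Lemma in_tuples' {A} (xs : list A) l L : length l = L -> (forall x, In x l -> In x xs) -> In l (tuples xs L).
Proof. intros <-; apply in_tuples. Qed.

Lemma nth_map_seq {A} (f : nat -> A) n i d : (i < n)%nat -> nth i (map f (seq 0 n)) d = f i.
Proof.
  intros H. rewrite (nth_indep _ _ (f 0%nat)) by (rewrite length_map, length_seq; auto).
  rewrite map_nth, seq_nth by auto. reflexivity.
Qed.

Lemma ln_le' x y : 0 < x -> x <= y -> ln x <= ln y.
Proof. intros Hx Hxy. destruct (Rle_lt_or_eq_dec _ _ Hxy) as [H|H]; [left; apply ln_increasing; auto|subst; lra]. Qed.

Theorem lemma2 (n1 n2 K1 K2 : nat) (z1 z2 : nat -> nat) (delta : R) :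
  (0 < n1)%nat -> (0 < n2)%nat -> (0 < K1)%nat -> (0 < K2)%nat ->
  (K1 <= n1)%nat -> (K2 <= n2)%nat ->
  (forall i, (i < n1)%nat -> (z1 i < K1)%nat) ->
  (forall j, (j < n2)%nat -> (z2 j < K2)%nat) ->
  0 < delta <= 1 ->
  exists Y : list mat,
    is_net n1 n2 (DCBM n1 n2 z1 z2) delta Y /\
    ln (INR (length Y)) <=
      INR (K1 * K2 + n1 + n2) * ln (9 / delta)
      + (INR (K1 * K2) + INR (n1 + n2) / 2) * ln (INR (n1 * n2)).
Proof.
  intros Hn1 Hn2 HK1 HK2 _ _ Hz1 Hz2 Hd.
  set (s := sqrt (INR (n1 * n2))).
  assert (Hnn : 1 <= INR (n1 * n2)) by (apply (le_INR 1); nia).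
  assert (Hs : 1 <= s) by (rewrite <- sqrt_1; apply sqrt_le_1_alt; lra).
  assert (Hss : s * s = INR (n1 * n2)) by (apply sqrt_sqrt; lra).
  set (N0 := Z.to_nat (up (3 * s / delta))).
  destruct (archimed (3 * s / delta)) as [A1 A2].
  assert (Hsd : 1 <= s / delta).
  { apply (Rmult_le_reg_r delta); [lra|]. field_simplify; nra. }
  assert (HN0 : INR N0 = IZR (up (3 * s / delta))).
  { unfold N0. rewrite INR_IZR_INZ, Z2Nat.id; auto. apply le_IZR. lra. }
  assert (HN0p : (0 < N0)%nat) by (apply INR_lt; simpl; lra).
  assert (HN0r : 0 < INR N0) by lra.
  set (M := S N0). set (G := seq 0 M).
  set (mk := fun (tB : list (list nat)) (tu tv : list nat) => (fun i j =>
     INR (nth (z2 j) (nth (z1 i) tB nil) 0%nat) / INR N0 * (INR (nth i tu 0%nat) / INR N0)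
       * (INR (nth j tv 0%nat) / INR N0)) : mat).
  exists (flat_map (fun tB => flat_map (fun tu => map (fun tv => mk tB tu tv) (tuples G n2))
            (tuples G n1)) (tuples (tuples G K2) K1)).
  split.
  - intros A HA. destruct (normalize _ _ _ _ _ HA) as [B [u [v [HB [Hu [Hv HT]]]]]].
    set (tB := map (fun a => map (fun b => q N0 (B a b)) (seq 0 K2)) (seq 0 K1)).
    set (tu := map (fun i => q N0 (u i)) (seq 0 n1)).
    set (tv := map (fun j => q N0 (v j)) (seq 0 n2)).
    assert (HG : forall x, (x <= N0)%nat -> In x G) by (intros; apply in_seq; unfold M; lia).
    assert (Hqs : forall x, 0 <= x <= 1 -> In (q N0 x) G) by (intros x Hx; apply HG, (q_spec N0 x HN0p Hx)).
    exists (mk tB tu tv). split.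
    + apply in_flat_map. exists tB. split.
      { apply in_tuples'; [unfold tB; rewrite length_map, length_seq; auto|]. intros x Hx. unfold tB in Hx. apply in_map_iff in Hx.
        destruct Hx as [a [<- _]].
        apply in_tuples'; [rewrite length_map, length_seq; auto|]. intros x Hx. apply in_map_iff in Hx. destruct Hx as [b [<- _]]. auto. }
      apply in_flat_map. exists tu. split.
      { apply in_tuples'; [unfold tu; rewrite length_map, length_seq; auto|]. intros x Hx. apply in_map_iff in Hx. destruct Hx as [i [<- Hi]].
        apply in_seq in Hi. apply Hqs, Hu. lia. }
      apply in_map_iff. exists tv. split; [reflexivity|].
      { apply in_tuples'; [unfold tv; rewrite length_map, length_seq; auto|]. intros x Hx. apply in_map_iff in Hx. destruct Hx as [j [<- Hj]].
        apply in_seq in Hj. apply Hqs, Hv. lia. }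
    + unfold frob, mat_sub.
      assert (Hq01 : forall x, 0 <= x <= 1 -> 0 <= INR (q N0 x) / INR N0 <= 1).
      { intros x Hx. destruct (q_spec N0 x HN0p Hx) as [Hk _]. apply le_INR in Hk.
        pose proof (pos_INR (q N0 x)). split.
        - apply Rmult_le_pos; [lra|left; apply Rinv_0_lt_compat; lra].
        - apply (Rmult_le_reg_r (INR N0)); [lra|]. field_simplify; lra. }
      assert (Hent : forall i j, (i < n1)%nat -> (j < n2)%nat ->
        (A i j - mk tB tu tv i j) ^ 2 <= (3 * (1 / INR N0)) ^ 2).
      { intros i j Hi Hj. rewrite <- pow2_abs. apply pow_incr. split; [apply Rabs_pos|].
        unfold mk, tB, tu, tv.
        rewrite (nth_map_seq _ K1) by auto. rewrite (nth_map_seq _ K2) by auto.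
        rewrite (nth_map_seq _ n1) by auto. rewrite (nth_map_seq _ n2) by auto.
        rewrite HT by auto.
        pose proof (HB (z1 i) (z2 j)). pose proof (Hu i Hi). pose proof (Hv j Hj).
        apply err3; auto; apply q_spec; auto. }
      assert (Hsum : sumR n1 (fun i => sumR n2 (fun j => (A i j - mk tB tu tv i j) ^ 2))
                 <= INR n1 * (INR n2 * (3 * (1 / INR N0)) ^ 2)).
      { apply sumR_le. intros i Hi. apply sumR_le. intros j Hj. auto. }
      assert (Hb : INR n1 * (INR n2 * (3 * (1 / INR N0)) ^ 2) <= delta ^ 2).
      { rewrite <- Rmult_assoc, <- mult_INR, <- Hss.
        assert (3 * s <= INR N0 * delta).
        { assert (3 * s / delta <= INR N0) by lra.
          apply (Rmult_le_compat_r delta) in H; [|lra]. field_simplify in H; lra. }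
        replace (s * s * (3 * (1 / INR N0)) ^ 2) with ((3 * s) ^ 2 / (INR N0) ^ 2) by (field; lra).
        apply (Rmult_le_reg_r (INR N0 ^ 2)); [apply pow_lt; lra|].
        field_simplify; [|lra]. nra. }
      rewrite <- (sqrt_pow2 delta) by lra. apply sqrt_le_1_alt. lra.
  - rewrite (length_flat_map_const _ _ (length (tuples G n1) * length (tuples G n2))).
    2:{ intros x. apply length_flat_map_const. intros; apply length_map. }
    rewrite !length_tuples. unfold G. rewrite length_seq.
    replace ((M ^ K2) ^ K1 * (M ^ n1 * M ^ n2))%nat with (M ^ (K1 * K2 + n1 + n2))%nat
      by (rewrite <- Nat.pow_mul_r, <- !Nat.pow_add_r; f_equal; lia).
    rewrite pow_INR, ln_pow by (apply lt_0_INR; unfold M; lia).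
    assert (HM : INR M <= 9 / delta * s).
    { unfold M. rewrite S_INR. replace (9 / delta * s) with (9 * (s / delta)) by (field; lra).
      replace (3 * s / delta) with (3 * (s / delta)) in * by (field; lra). lra. }
    assert (Hl : ln (INR M) <= ln (9 / delta) + ln s).
    { rewrite <- ln_mult; [|apply Rdiv_lt_0_compat; lra|lra].
      apply ln_le'; [apply lt_0_INR; unfold M; lia|exact HM]. }
    assert (Hln : ln (INR (n1 * n2)) = 2 * ln s) by (rewrite <- Hss, ln_mult by lra; ring).
    assert (Hls : 0 <= ln s) by (rewrite <- ln_1; apply ln_le'; lra).
    rewrite Hln, !plus_INR.
    pose proof (pos_INR (K1 * K2)). pose proof (pos_INR n1). pose proof (pos_INR n2).
    assert (0 <= INR (K1*K2) + INR n1 + INR n2) by lra.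
    assert (INR (K1 * K2 + n1 + n2) = INR (K1*K2) + INR n1 + INR n2) by (rewrite !plus_INR; ring).
    nra.
Qed.
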